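(* For every 3-periodic of $\mathcal{E}$, the interior angles $\theta^\dagger_{1,1},\theta^\dagger_{1,2},\theta^\dagger_{1,3}$ of the focus-inversive triangle satisfy \[\sum_{i=1}^3\cos\theta^\dagger_{1,i}=\frac{\delta\,(a^2+c^2-\delta)}{a^2c^2};\] in particular this sum is invariant over the family (and independent of $\rho$).
   Context: Let $a>b>0$ and let $\mathcal{E}$ be the ellipse $x^2/a^2+y^2/b^2=1$. Set $c=\sqrt{a^2-b^2}$, $\delta=\sqrt{a^4-a^2b^2+b^4}$, and let the foci be $f_1=(-c,0)$, $f_2=(c,0)$. A 3-periodic is a triangle $P_1P_2P_3$ with vertices on $\mathcal{E}$ such that at each vertex the normal to $\mathcal{E}$ bisects the angle formed by the two sides meeting at that vertex; these form a one-parameter family (one through every point of $\mathcal{E}$). Fix $\rho>0$; the focus-inversive triangle has vertices $P_i^\dagger=f_1+(\rho/d_{1,i})^2(P_i-f_1)$, $d_{1,i}=|P_i-f_1|$. *)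

(* Defs.v *)
From Stdlib Require Import Reals.
Open Scope R_scope.

Definition pt := (R * R)%type.
Definition vsub (p q : pt) : pt := (fst p - fst q, snd p - snd q).
Definition vadd (p q : pt) : pt := (fst p + fst q, snd p + snd q).
Definition vscale (k : R) (p : pt) : pt := (k * fst p, k * snd p).
Definition dot (p q : pt) : R := fst p * fst q + snd p * snd q.
Definition norm (p : pt) : R := sqrt (dot p p).
Definition dist (p q : pt) : R := norm (vsub p q).

Definition vangle (u v : pt) : R := acos (dot u v / (norm u * norm v)).

Definition angle_at (P Q S : pt) : R := vangle (vsub Q P) (vsub S P).

Definition on_ellipse (a b : R) (p : pt) : Prop :=
  (fst p)^2 / a^2 + (snd p)^2 / b^2 = 1.

Definition ellipse_normal (a b : R) (p : pt) : pt :=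
  (fst p / a^2, snd p / b^2).

Definition normal_bisects (a b : R) (P Q S : pt) : Prop :=
  vangle (ellipse_normal a b P) (vsub Q P) = vangle (ellipse_normal a b P) (vsub S P).

Definition three_periodic (a b : R) (P1 P2 P3 : pt) : Prop :=
  on_ellipse a b P1 /\ on_ellipse a b P2 /\ on_ellipse a b P3 /\
  P1 <> P2 /\ P2 <> P3 /\ P3 <> P1 /\
  normal_bisects a b P1 P2 P3 /\
  normal_bisects a b P2 P3 P1 /\
  normal_bisects a b P3 P1 P2.

Definition focus1 (a b : R) : pt := (- sqrt (a^2 - b^2), 0).

Definition invert (f : pt) (rho : R) (P : pt) : pt :=
  vadd f (vscale ((rho / dist P f)^2) (vsub P f)).

(* Main.v *)
Require Import Defs.
From Stdlib Require Import Reals.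
From Stdlib Require Import Nsatz Lra Psatz.
From Coquelicot Require Coquelicot.
Import Defs.
Open Scope R_scope.

Module Cx.
Import Coquelicot.Coquelicot.
Local Open Scope C_scope.


Lemma Ceq (x y : Complex.C) : fst x = fst y -> snd x = snd y -> x = y.
Proof. destruct x, y; simpl; intros; subst; reflexivity. Qed.

Definition qq (e z : Complex.C) := e*z^2 + 2*z + e.

Ltac cunf := unfold Cminus, Cplus, Copp, Cmult, RtoC in *; simpl in *.

Lemma Cmul_eq0 (x y : Complex.C) : x <> 0 -> x * y = 0 -> y = 0.
Proof. intros Hx H. replace y with ((x*y)/x) by (field; exact Hx). rewrite H. field. exact Hx. Qed.

Lemma Csub_neq (x y : Complex.C) : x <> y -> x - y <> 0.
Proof. intros H E. apply H. replace x with ((x - y) + y) by ring. rewrite E. ring. Qed.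

Lemma CE1 (z1 z2 z3 k mu : Complex.C) :
  z1^2+z2^2 - k*(z1^2*z2^2+1) = 2*mu*z1*z2 ->
  z1^2+z3^2 - k*(z1^2*z3^2+1) = 2*mu*z1*z3 ->
  z2 <> z3 -> (z2+z3)*(1-k*z1^2) = 2*mu*z1.
Proof.
intros H2 H3 Hd.
assert (E : (z2 - z3)*((z2+z3)*(1-k*z1^2) - 2*mu*z1) =
  (z1^2+z2^2 - k*(z1^2*z2^2+1) - 2*mu*z1*z2) - (z1^2+z3^2 - k*(z1^2*z3^2+1) - 2*mu*z1*z3)) by ring.
rewrite H2, H3 in E. replace (2*mu*z1*z2 - 2*mu*z1*z2 - (2*mu*z1*z3 - 2*mu*z1*z3)) with (RtoC 0) in E by ring.
apply Cmul_eq0 in E; [|apply Csub_neq; exact Hd].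
replace ((z2+z3)*(1-k*z1^2)) with (((z2+z3)*(1-k*z1^2) - 2*mu*z1) + 2*mu*z1) by ring.
rewrite E. ring.
Qed.

Lemma CVieta (z1 z2 z3 k mu : Complex.C) :
  z1^2+z2^2 - k*(z1^2*z2^2+1) = 2*mu*z1*z2 ->
  (z2+z3)*(1-k*z1^2) = 2*mu*z1 ->
  z2*z3*(1-k*z1^2) = z1^2 - k.
Proof.
intros H E.
assert (X : z2*z3*(1-k*z1^2) - (z1^2 - k) = -((z1^2+z2^2 - k*(z1^2*z2^2+1)) - 2*mu*z1*z2) + z2*((z2+z3)*(1-k*z1^2) - 2*mu*z1)) by ring.
rewrite H, E in X.
replace (- (2 * mu * z1 * z2 - 2 * mu * z1 * z2) + z2 * (2 * mu * z1 - 2 * mu * z1)) with (RtoC 0) in X by ring.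
replace (z2*z3*(1-k*z1^2)) with ((z2*z3*(1-k*z1^2) - (z1^2 - k)) + (z1^2 - k)) by ring.
rewrite X. ring.
Qed.


Lemma closure (C1 S1 C2 S2 C3 S3 k mu : R) :
  (C1^2+S1^2 = 1)%R -> (C2^2+S2^2 = 1)%R -> (C3^2+S3^2 = 1)%R ->
  (C1,S1) <> (C2,S2) -> (C1,S1) <> (C3,S3) -> (C2,S2) <> (C3,S3) -> k <> 0%R ->
  let z1 := (C1,S1) in let z2 := (C2,S2) in let z3 := (C3,S3) in
  (z2+z3)*(1-RtoC k*z1^2) = 2*RtoC mu*z1 ->
  (z1+z3)*(1-RtoC k*z2^2) = 2*RtoC mu*z2 ->
  (z1+z2)*(1-RtoC k*z3^2) = 2*RtoC mu*z3 ->
  (k^2 = 1 + 2*mu)%R.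
Proof.
intros U1 U2 U3 D12 D13 D23 Hk z1 z2 z3 E1 E2 E3.
set (s1 := z1+z2+z3). set (s2 := z1*z2+z1*z3+z2*z3). set (s3 := z1*z2*z3).
assert (G1 : RtoC k*z1^3 - RtoC k*s1*z1^2 - (1+2*RtoC mu)*z1 + s1 = 0).
{ replace (RtoC k*z1^3 - RtoC k*s1*z1^2 - (1+2*RtoC mu)*z1 + s1) with ((z2+z3)*(1-RtoC k*z1^2) - 2*RtoC mu*z1) by (unfold s1; ring). rewrite E1. ring. }
assert (G2 : RtoC k*z2^3 - RtoC k*s1*z2^2 - (1+2*RtoC mu)*z2 + s1 = 0).
{ replace (RtoC k*z2^3 - RtoC k*s1*z2^2 - (1+2*RtoC mu)*z2 + s1) with ((z1+z3)*(1-RtoC k*z2^2) - 2*RtoC mu*z2) by (unfold s1; ring). rewrite E2. ring. }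
assert (V2 : RtoC k*s2 + 1 + 2*RtoC mu = 0).
{ apply (Cmul_eq0 (z1 - z2)). apply Csub_neq. exact D12.
  replace ((z1 - z2)*(RtoC k*s2 + 1 + 2*RtoC mu)) with
   (-((RtoC k*z1^3 - RtoC k*s1*z1^2 - (1+2*RtoC mu)*z1 + s1) - (RtoC k*z2^3 - RtoC k*s1*z2^2 - (1+2*RtoC mu)*z2 + s1))) by (unfold s1, s2; ring).
  rewrite G1, G2. ring. }
assert (V1 : s1 = - RtoC k * s3).
{ replace s1 with ((RtoC k*z1^3 - RtoC k*s1*z1^2 - (1+2*RtoC mu)*z1 + s1) - RtoC k*s3 + (RtoC k*s2 + 1 + 2*RtoC mu)*z1) by (unfold s1, s2, s3; ring).
  rewrite G1, V2. ring. }
assert (Hs2 : s2 = RtoC (-(1+2*mu)/k)).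
{ assert (X : s2 - RtoC (-(1+2*mu)/k) = 0).
  { apply (Cmul_eq0 (RtoC k)). intro E. apply Hk. injection E. auto.
    replace (RtoC k * (s2 - RtoC (-(1+2*mu)/k))) with (RtoC k * s2 + 1 + 2*RtoC mu) by (apply Ceq; cunf; field; exact Hk).
    exact V2. }
  replace s2 with ((s2 - RtoC (-(1+2*mu)/k)) + RtoC (-(1+2*mu)/k)) by ring. rewrite X. ring. }
set (w1 := (C1,(-S1)%R) : Complex.C). set (w2 := (C2,(-S2)%R) : Complex.C). set (w3 := (C3,(-S3)%R) : Complex.C).
assert (W1 : z1*w1 = 1) by (apply Ceq; unfold z1, w1; cunf; nra).
assert (W2 : z2*w2 = 1) by (apply Ceq; unfold z2, w2; cunf; nra).
assert (W3 : z3*w3 = 1) by (apply Ceq; unfold z3, w3; cunf; nra).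
set (s2' := w1*w2+w1*w3+w2*w3).
assert (Cj : s3*s2' = s1).
{ replace (s3*s2') with ((z1*w1)*(z2*w2)*z3 + (z1*w1)*(z3*w3)*z2 + (z2*w2)*(z3*w3)*z1) by (unfold s3, s2'; ring).
  rewrite W1, W2, W3. unfold s1. ring. }
assert (F1 : fst s2 = (-(1+2*mu)/k)%R) by (rewrite Hs2; reflexivity).
assert (F2 : snd s2 = 0%R) by (rewrite Hs2; reflexivity).
assert (F3 : fst s2' = fst s2) by (unfold s2', s2, w1, w2, w3, z1, z2, z3; cunf; ring).
assert (F4 : snd s2' = (- snd s2)%R) by (unfold s2', s2, w1, w2, w3, z1, z2, z3; cunf; ring).
assert (Eq : s2' = s2) by (apply Ceq; [exact F3 | rewrite F4, F2; ring]).
rewrite Eq in Cj.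
assert (N3 : s3 <> 0).
{ intro E. assert (X : s3 * (w1*w2*w3) = 1) by (replace (s3*(w1*w2*w3)) with ((z1*w1)*(z2*w2)*(z3*w3)) by (unfold s3; ring); rewrite W1, W2, W3; ring).
  rewrite E in X. rewrite Cmult_0_l in X. apply C1_nz. symmetry. exact X. }
assert (X : s2 + RtoC k = 0).
{ apply (Cmul_eq0 s3). exact N3. replace (s3 * (s2 + RtoC k)) with (s3*s2 + RtoC k * s3) by ring.
  rewrite Cj, V1. ring. }
assert (Y : fst (s2 + RtoC k) = 0%R) by (rewrite X; reflexivity).
cunf. rewrite F1 in Y. field_simplify in Y; [|exact Hk].
apply (Rmult_eq_reg_r (/k)); [|apply Rinv_neq_0_compat; exact Hk].
nra.
Qed.




Lemma core_sp (z1 s p k e : Complex.C) :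
  let D := 1 - k*z1^2 in
  let Q := (3-k)*(1+k) in
  D <> 0 -> Q <> 0 ->
  s * D = (k^2-1)*z1 -> p * D = z1^2 - k ->
  e^2*Q = 4*k ->
  let A1 := (s^2 - 4*p) * qq e z1 in
  let S23 := (- 2*p*e + 2*p^2*e + 2*s*p + s^2*e - 8*z1*p - 2*z1*s*e - 2*z1*s*p*e + 2*z1^2*e - 2*z1^2*p*e + 2*z1^2*s + z1^2*s^2*e) in
  let P23 := (p^2*e^2 + 4*p^3 - 2*p^3*e^2 + p^4*e^2 + 2*s*p^2*e + 2*s*p^3*e + s^2*p^2*e^2 - 2*z1*s*p*e^2 - 8*z1*s*p^2 + 4*z1*s*p^2*e^2 - 2*z1*s*p^3*e^2 - 4*z1*s^2*p*e - 4*z1*s^2*p^2*e - 2*z1*s^3*p*e^2 + 2*z1^2*p*e^2 + 8*z1^2*p^2 - 4*z1^2*p^2*e^2 + 2*z1^2*p^3*e^2 + 4*z1^2*s*p*e + 4*z1^2*s*p^2*e + z1^2*s^2*e^2 + 4*z1^2*s^2*p + z1^2*s^2*p^2*e^2 + 2*z1^2*s^3*e + 2*z1^2*s^3*p*e + z1^2*s^4*e^2 - 2*z1^3*s*e^2 - 8*z1^3*s*p + 4*z1^3*s*p*e^2 - 2*z1^3*s*p^2*e^2 - 4*z1^3*s^2*e - 4*z1^3*s^2*p*e - 2*z1^3*s^3*e^2 + z1^4*e^2 + 4*z1^4*p - 2*z1^4*p*e^2 + z1^4*p^2*e^2 + 2*z1^4*s*e + 2*z1^4*s*p*e + z1^4*s^2*e^2)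 in
  let h := k*e^2+2-e^2 in
  let Tm4 := 2*h*(1+e^2) - h^2 - 4*e^2 in
  2*e^2 * (S23 - A1) * (A1^2 - S23^2 + 4*P23) - Tm4*A1*P23 = 0.
Proof.
intros D Q HD HQ Hs Hp He A1 S23 P23 h Tm4.
assert (Es : s = (k^2-1)*z1/D) by (rewrite <- Hs; field; exact HD).
assert (Ep : p = (z1^2-k)/D) by (rewrite <- Hp; field; exact HD).
assert (Key : Q^3 * D^6 * (2*e^2 * (S23 - A1) * (A1^2 - S23^2 + 4*P23) - Tm4*A1*P23) = (e^2*Q - 4*k) * 2 * (- 324*k^3*e^3 + 54*k^3*e^5 - 324*k^4*e^3 + 108*k^4*e^5 + 540*k^5*e^3 - 36*k^5*e^5 + 444*k^6*e^3 - 164*k^6*e^5 - 300*k^7*e^3 - 24*k^7*e^5 - 108*k^8*e^3 + 68*k^8*e^5 + 84*k^9*e^3 + 4*k^9*e^5 - 12*k^10*e^3 - 12*k^10*e^5 + 2*k^11*e^5 + 216*z1*k^4*e^2 + 324*z1*k^4*e^4 + 216*z1*k^5*e^2 + 216*z1*k^5*e^4 - 360*z1*k^6*e^2 - 648*z1*k^6*e^4 - 296*z1*k^7*e^2 - 264*z1*k^7*e^4 + 200*z1*k^8*e^2 + 448*z1*k^8*e^4 + 72*z1*k^9*e^2 + 8*z1*k^9*e^4 - 56*z1*k^10*e^2 - 120*z1*k^10*e^4 + 8*z1*k^11*e^2 + 40*z1*k^11*e^4 - 4*z1*k^12*e^4 + 2187*z1^2*k^2*e^3 - (729/2)*z1^2*k^2*e^5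 + 2187*z1^2*k^3*e^3 - 729*z1^2*k^3*e^5 - 3159*z1^2*k^4*e^3 + 162*z1^2*k^4*e^5 - 2835*z1^2*k^5*e^3 + 999*z1^2*k^5*e^5 + 810*z1^2*k^6*e^3 + (675/2)*z1^2*k^6*e^5 + 522*z1^2*k^7*e^3 - 222*z1^2*k^7*e^5 + 462*z1^2*k^8*e^3 - 164*z1^2*k^8*e^5 + 54*z1^2*k^9*e^3 - 86*z1^2*k^9*e^5 - 309*z1^2*k^10*e^3 + (85/2)*z1^2*k^10*e^5 + 75*z1^2*k^11*e^3 + 39*z1^2*k^11*e^5 + 9*z1^2*k^12*e^3 - 14*z1^2*k^12*e^5 - 3*z1^2*k^13*e^3 - z1^2*k^13*e^5 + (1/2)*z1^2*k^14*e^5 - 1674*z1^3*k^3*e^2 - 2511*z1^3*k^3*e^4 - 1674*z1^3*k^4*e^2 - 1674*z1^3*k^4*e^4 + 2682*z1^3*k^5*e^2 + 4860*z1^3*k^5*e^4 + 2186*z1^3*k^6*e^2 + 1938*z1^3*k^6*e^4 - 1316*z1^3*k^7*e^2 - 3067*z1^3*k^7*e^4 - 356*z1^3*k^8*e^2 + 124*z1^3*k^8*e^4 + 244*z1^3*k^9*e^2 + 544*z1^3*k^9*e^4 - 172*z1^3*k^10*e^2 - 380*z1^3*k^10*e^4 + 78*z1^3*k^11*e^2 + 203*z1^3*k^11*e^4 + 14*z1^3*k^12*e^2 - 18*z1^3*k^12*e^4 - 14*z1^3*k^13*e^2 - 28*z1^3*k^13*e^4 + 2*z1^3*k^14*e^2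 + 10*z1^3*k^14*e^4 - z1^3*k^15*e^4 - 4374*z1^4*k*e^3 + 729*z1^4*k*e^5 - 4374*z1^4*k^2*e^3 + 1458*z1^4*k^2*e^5 + 1458*z1^4*k^3*e^3 + 486*z1^4*k^3*e^5 + 2997*z1^4*k^4*e^3 - (1485/2)*z1^4*k^4*e^5 + 9639*z1^4*k^5*e^3 - 2106*z1^4*k^5*e^5 + 2781*z1^4*k^6*e^3 - 2070*z1^4*k^6*e^5 - 10203*z1^4*k^7*e^3 + 1237*z1^4*k^7*e^5 - 846*z1^4*k^8*e^3 + (3683/2)*z1^4*k^8*e^5 + 3648*z1^4*k^9*e^3 - 467*z1^4*k^9*e^5 - 588*z1^4*k^10*e^3 - 510*z1^4*k^10*e^5 - 132*z1^4*k^11*e^3 + 120*z1^4*k^11*e^5 + 9*z1^4*k^12*e^3 + (41/2)*z1^4*k^12*e^5 - 33*z1^4*k^13*e^3 + 4*z1^4*k^13*e^5 + 21*z1^4*k^14*e^3 + 2*z1^4*k^14*e^5 - 3*z1^4*k^15*e^3 - 3*z1^4*k^15*e^5 + (1/2)*z1^4*k^16*e^5 + 4374*z1^5*k^2*e^2 + 6561*z1^5*k^2*e^4 + 4374*z1^5*k^3*e^2 + 4374*z1^5*k^3*e^4 - 4752*z1^5*k^4*e^2 - 9315*z1^5*k^4*e^4 - 3456*z1^5*k^5*e^2 - 2808*z1^5*k^5*e^4 - 1098*z1^5*k^6*e^2 + 81*z1^5*k^6*e^4 - 2938*z1^5*k^7*e^2 - 3858*z1^5*k^7*e^4 + 2800*z1^5*k^8*e^2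 + 5669*z1^5*k^8*e^4 + 2320*z1^5*k^9*e^2 + 2080*z1^5*k^9*e^4 - 1598*z1^5*k^10*e^2 - 3557*z1^5*k^10*e^4 - 286*z1^5*k^11*e^2 + 370*z1^5*k^11*e^4 + 288*z1^5*k^12*e^2 + 575*z1^5*k^12*e^4 - 16*z1^5*k^13*e^2 - 168*z1^5*k^13*e^4 - 14*z1^5*k^14*e^2 - 13*z1^5*k^14*e^4 + 2*z1^5*k^15*e^2 + 10*z1^5*k^15*e^4 - z1^5*k^16*e^4 + 2187*z1^6*e^3 - (729/2)*z1^6*e^5 + 2187*z1^6*k*e^3 - 729*z1^6*k*e^5 + 12393*z1^6*k^2*e^3 - 2430*z1^6*k^2*e^5 + 3969*z1^6*k^3*e^3 - 2727*z1^6*k^3*e^5 - 32400*z1^6*k^4*e^3 + (9477/2)*z1^6*k^4*e^5 - 5886*z1^6*k^5*e^3 + 6381*z1^6*k^5*e^5 + 21666*z1^6*k^6*e^3 - 2630*z1^6*k^6*e^5 - 3294*z1^6*k^7*e^3 - 3062*z1^6*k^7*e^5 - 195*z1^6*k^8*e^3 + (1163/2)*z1^6*k^8*e^5 + 2415*z1^6*k^9*e^3 - 370*z1^6*k^9*e^5 - 4779*z1^6*k^10*e^3 + 394*z1^6*k^10*e^5 + 1053*z1^6*k^11*e^3 + 621*z1^6*k^11*e^5 + 1182*z1^6*k^12*e^3 - (745/2)*z1^6*k^12*e^5 - 492*z1^6*k^13*e^3 - 115*z1^6*k^13*e^5 - 48*z1^6*k^14*e^3 + 90*z1^6*k^14*e^5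 + 48*z1^6*k^15*e^3 - 6*z1^6*k^16*e^3 - 7*z1^6*k^16*e^5 + z1^6*k^17*e^5 - 4374*z1^7*k*e^2 - 6561*z1^7*k*e^4 - 4374*z1^7*k^2*e^2 - 4374*z1^7*k^2*e^4 - 2916*z1^7*k^3*e^2 - 2187*z1^7*k^3*e^4 - 4212*z1^7*k^4*e^2 - 4860*z1^7*k^4*e^4 + 15336*z1^7*k^5*e^2 + 25110*z1^7*k^5*e^4 + 14904*z1^7*k^6*e^2 + 14688*z1^7*k^6*e^4 - 12114*z1^7*k^7*e^2 - 25623*z1^7*k^7*e^4 - 6658*z1^7*k^8*e^2 - 3930*z1^7*k^8*e^4 + 4522*z1^7*k^9*e^2 + 10112*z1^7*k^9*e^4 + 138*z1^7*k^10*e^2 - 2054*z1^7*k^10*e^4 - 376*z1^7*k^11*e^2 - 633*z1^7*k^11*e^4 + 216*z1^7*k^12*e^2 + 512*z1^7*k^12*e^4 - 92*z1^7*k^13*e^2 - 246*z1^7*k^13*e^4 - 12*z1^7*k^14*e^2 + 28*z1^7*k^14*e^4 + 14*z1^7*k^15*e^2 + 27*z1^7*k^15*e^4 - 2*z1^7*k^16*e^2 - 10*z1^7*k^16*e^4 + z1^7*k^17*e^4 - 8748*z1^8*k*e^3 + 1458*z1^8*k*e^5 + 4374*z1^8*k^2*e^3 + 729*z1^8*k^2*e^5 + 7290*z1^8*k^3*e^3 - 1944*z1^8*k^3*e^5 - 20250*z1^8*k^4*e^3 + 2160*z1^8*k^4*e^5 + 25110*z1^8*k^5*e^3 - 810*z1^8*k^5*e^5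 + 21519*z1^8*k^6*e^3 - (15543/2)*z1^8*k^6*e^5 - 44625*z1^8*k^7*e^3 + 3851*z1^8*k^7*e^5 - 387*z1^8*k^8*e^3 + 7502*z1^8*k^8*e^5 + 26265*z1^8*k^9*e^3 - 4313*z1^8*k^9*e^5 - 7692*z1^8*k^10*e^3 - (6191/2)*z1^8*k^10*e^5 - 5736*z1^8*k^11*e^3 + 2238*z1^8*k^11*e^5 + 2808*z1^8*k^12*e^3 + 488*z1^8*k^12*e^5 + 432*z1^8*k^13*e^3 - 540*z1^8*k^13*e^5 - 393*z1^8*k^14*e^3 - (13/2)*z1^8*k^14*e^5 + 15*z1^8*k^15*e^3 + 63*z1^8*k^15*e^5 + 21*z1^8*k^16*e^3 - 6*z1^8*k^16*e^5 - 3*z1^8*k^17*e^3 - 3*z1^8*k^17*e^5 + (1/2)*z1^8*k^18*e^5 + 1458*z1^9*e^2 + 2187*z1^9*e^4 + 1458*z1^9*k*e^2 + 1458*z1^9*k*e^4 + 9720*z1^9*k^2*e^2 + 13851*z1^9*k^2*e^4 + 10152*z1^9*k^3*e^2 + 10368*z1^9*k^3*e^4 - 14580*z1^9*k^4*e^2 - 26946*z1^9*k^4*e^4 - 11844*z1^9*k^5*e^2 - 10476*z1^9*k^5*e^4 + 216*z1^9*k^6*e^2 + 6246*z1^9*k^6*e^4 - 5272*z1^9*k^7*e^2 - 8016*z1^9*k^7*e^4 + 7312*z1^9*k^8*e^2 + 13604*z1^9*k^8*e^4 + 7328*z1^9*k^9*e^2 + 7336*z1^9*k^9*e^4 - 5544*z1^9*k^10*e^2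 - 11980*z1^9*k^10*e^4 - 2008*z1^9*k^11*e^2 - 240*z1^9*k^11*e^4 + 1636*z1^9*k^12*e^2 + 3458*z1^9*k^12*e^4 + 180*z1^9*k^13*e^2 - 548*z1^9*k^13*e^4 - 232*z1^9*k^14*e^2 - 438*z1^9*k^14*e^4 + 8*z1^9*k^15*e^2 + 128*z1^9*k^15*e^4 + 14*z1^9*k^16*e^2 + 17*z1^9*k^16*e^4 - 2*z1^9*k^17*e^2 - 10*z1^9*k^17*e^4 + z1^9*k^18*e^4 - 8748*z1^10*k*e^3 + 1458*z1^10*k*e^5 + 4374*z1^10*k^2*e^3 + 729*z1^10*k^2*e^5 + 7290*z1^10*k^3*e^3 - 1944*z1^10*k^3*e^5 - 20250*z1^10*k^4*e^3 + 2160*z1^10*k^4*e^5 + 25110*z1^10*k^5*e^3 - 810*z1^10*k^5*e^5 + 21519*z1^10*k^6*e^3 - (15543/2)*z1^10*k^6*e^5 - 44625*z1^10*k^7*e^3 + 3851*z1^10*k^7*e^5 - 387*z1^10*k^8*e^3 + 7502*z1^10*k^8*e^5 + 26265*z1^10*k^9*e^3 - 4313*z1^10*k^9*e^5 - 7692*z1^10*k^10*e^3 - (6191/2)*z1^10*k^10*e^5 - 5736*z1^10*k^11*e^3 + 2238*z1^10*k^11*e^5 + 2808*z1^10*k^12*e^3 + 488*z1^10*k^12*e^5 + 432*z1^10*k^13*e^3 - 540*z1^10*k^13*e^5 - 393*z1^10*k^14*e^3 - (13/2)*z1^10*k^14*e^5 + 15*z1^10*k^15*e^3 + 63*z1^10*k^15*e^5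 + 21*z1^10*k^16*e^3 - 6*z1^10*k^16*e^5 - 3*z1^10*k^17*e^3 - 3*z1^10*k^17*e^5 + (1/2)*z1^10*k^18*e^5 - 4374*z1^11*k*e^2 - 6561*z1^11*k*e^4 - 4374*z1^11*k^2*e^2 - 4374*z1^11*k^2*e^4 - 2916*z1^11*k^3*e^2 - 2187*z1^11*k^3*e^4 - 4212*z1^11*k^4*e^2 - 4860*z1^11*k^4*e^4 + 15336*z1^11*k^5*e^2 + 25110*z1^11*k^5*e^4 + 14904*z1^11*k^6*e^2 + 14688*z1^11*k^6*e^4 - 12114*z1^11*k^7*e^2 - 25623*z1^11*k^7*e^4 - 6658*z1^11*k^8*e^2 - 3930*z1^11*k^8*e^4 + 4522*z1^11*k^9*e^2 + 10112*z1^11*k^9*e^4 + 138*z1^11*k^10*e^2 - 2054*z1^11*k^10*e^4 - 376*z1^11*k^11*e^2 - 633*z1^11*k^11*e^4 + 216*z1^11*k^12*e^2 + 512*z1^11*k^12*e^4 - 92*z1^11*k^13*e^2 - 246*z1^11*k^13*e^4 - 12*z1^11*k^14*e^2 + 28*z1^11*k^14*e^4 + 14*z1^11*k^15*e^2 + 27*z1^11*k^15*e^4 - 2*z1^11*k^16*e^2 - 10*z1^11*k^16*e^4 + z1^11*k^17*e^4 + 2187*z1^12*e^3 - (729/2)*z1^12*e^5 + 2187*z1^12*k*e^3 - 729*z1^12*k*e^5 + 12393*z1^12*k^2*e^3 - 2430*z1^12*k^2*e^5 + 3969*z1^12*k^3*e^3 - 2727*z1^12*k^3*e^5 - 32400*z1^12*k^4*e^3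 + (9477/2)*z1^12*k^4*e^5 - 5886*z1^12*k^5*e^3 + 6381*z1^12*k^5*e^5 + 21666*z1^12*k^6*e^3 - 2630*z1^12*k^6*e^5 - 3294*z1^12*k^7*e^3 - 3062*z1^12*k^7*e^5 - 195*z1^12*k^8*e^3 + (1163/2)*z1^12*k^8*e^5 + 2415*z1^12*k^9*e^3 - 370*z1^12*k^9*e^5 - 4779*z1^12*k^10*e^3 + 394*z1^12*k^10*e^5 + 1053*z1^12*k^11*e^3 + 621*z1^12*k^11*e^5 + 1182*z1^12*k^12*e^3 - (745/2)*z1^12*k^12*e^5 - 492*z1^12*k^13*e^3 - 115*z1^12*k^13*e^5 - 48*z1^12*k^14*e^3 + 90*z1^12*k^14*e^5 + 48*z1^12*k^15*e^3 - 6*z1^12*k^16*e^3 - 7*z1^12*k^16*e^5 + z1^12*k^17*e^5 + 4374*z1^13*k^2*e^2 + 6561*z1^13*k^2*e^4 + 4374*z1^13*k^3*e^2 + 4374*z1^13*k^3*e^4 - 4752*z1^13*k^4*e^2 - 9315*z1^13*k^4*e^4 - 3456*z1^13*k^5*e^2 - 2808*z1^13*k^5*e^4 - 1098*z1^13*k^6*e^2 + 81*z1^13*k^6*e^4 - 2938*z1^13*k^7*e^2 - 3858*z1^13*k^7*e^4 + 2800*z1^13*k^8*e^2 + 5669*z1^13*k^8*e^4 + 2320*z1^13*k^9*e^2 + 2080*z1^13*k^9*e^4 - 1598*z1^13*k^10*e^2 - 3557*z1^13*k^10*e^4 - 286*z1^13*k^11*e^2 + 370*z1^13*k^11*e^4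 + 288*z1^13*k^12*e^2 + 575*z1^13*k^12*e^4 - 16*z1^13*k^13*e^2 - 168*z1^13*k^13*e^4 - 14*z1^13*k^14*e^2 - 13*z1^13*k^14*e^4 + 2*z1^13*k^15*e^2 + 10*z1^13*k^15*e^4 - z1^13*k^16*e^4 - 4374*z1^14*k*e^3 + 729*z1^14*k*e^5 - 4374*z1^14*k^2*e^3 + 1458*z1^14*k^2*e^5 + 1458*z1^14*k^3*e^3 + 486*z1^14*k^3*e^5 + 2997*z1^14*k^4*e^3 - (1485/2)*z1^14*k^4*e^5 + 9639*z1^14*k^5*e^3 - 2106*z1^14*k^5*e^5 + 2781*z1^14*k^6*e^3 - 2070*z1^14*k^6*e^5 - 10203*z1^14*k^7*e^3 + 1237*z1^14*k^7*e^5 - 846*z1^14*k^8*e^3 + (3683/2)*z1^14*k^8*e^5 + 3648*z1^14*k^9*e^3 - 467*z1^14*k^9*e^5 - 588*z1^14*k^10*e^3 - 510*z1^14*k^10*e^5 - 132*z1^14*k^11*e^3 + 120*z1^14*k^11*e^5 + 9*z1^14*k^12*e^3 + (41/2)*z1^14*k^12*e^5 - 33*z1^14*k^13*e^3 + 4*z1^14*k^13*e^5 + 21*z1^14*k^14*e^3 + 2*z1^14*k^14*e^5 - 3*z1^14*k^15*e^3 - 3*z1^14*k^15*e^5 + (1/2)*z1^14*k^16*e^5 - 1674*z1^15*k^3*e^2 - 2511*z1^15*k^3*e^4 - 1674*z1^15*k^4*e^2 - 1674*z1^15*k^4*e^4 + 2682*z1^15*k^5*e^2 + 4860*z1^15*k^5*e^4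 + 2186*z1^15*k^6*e^2 + 1938*z1^15*k^6*e^4 - 1316*z1^15*k^7*e^2 - 3067*z1^15*k^7*e^4 - 356*z1^15*k^8*e^2 + 124*z1^15*k^8*e^4 + 244*z1^15*k^9*e^2 + 544*z1^15*k^9*e^4 - 172*z1^15*k^10*e^2 - 380*z1^15*k^10*e^4 + 78*z1^15*k^11*e^2 + 203*z1^15*k^11*e^4 + 14*z1^15*k^12*e^2 - 18*z1^15*k^12*e^4 - 14*z1^15*k^13*e^2 - 28*z1^15*k^13*e^4 + 2*z1^15*k^14*e^2 + 10*z1^15*k^14*e^4 - z1^15*k^15*e^4 + 2187*z1^16*k^2*e^3 - (729/2)*z1^16*k^2*e^5 + 2187*z1^16*k^3*e^3 - 729*z1^16*k^3*e^5 - 3159*z1^16*k^4*e^3 + 162*z1^16*k^4*e^5 - 2835*z1^16*k^5*e^3 + 999*z1^16*k^5*e^5 + 810*z1^16*k^6*e^3 + (675/2)*z1^16*k^6*e^5 + 522*z1^16*k^7*e^3 - 222*z1^16*k^7*e^5 + 462*z1^16*k^8*e^3 - 164*z1^16*k^8*e^5 + 54*z1^16*k^9*e^3 - 86*z1^16*k^9*e^5 - 309*z1^16*k^10*e^3 + (85/2)*z1^16*k^10*e^5 + 75*z1^16*k^11*e^3 + 39*z1^16*k^11*e^5 + 9*z1^16*k^12*e^3 - 14*z1^16*k^12*e^5 - 3*z1^16*k^13*e^3 - z1^16*k^13*e^5 + (1/2)*z1^16*k^14*e^5 + 216*z1^17*k^4*e^2 + 324*z1^17*k^4*e^4 + 216*z1^17*k^5*e^2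 + 216*z1^17*k^5*e^4 - 360*z1^17*k^6*e^2 - 648*z1^17*k^6*e^4 - 296*z1^17*k^7*e^2 - 264*z1^17*k^7*e^4 + 200*z1^17*k^8*e^2 + 448*z1^17*k^8*e^4 + 72*z1^17*k^9*e^2 + 8*z1^17*k^9*e^4 - 56*z1^17*k^10*e^2 - 120*z1^17*k^10*e^4 + 8*z1^17*k^11*e^2 + 40*z1^17*k^11*e^4 - 4*z1^17*k^12*e^4 - 324*z1^18*k^3*e^3 + 54*z1^18*k^3*e^5 - 324*z1^18*k^4*e^3 + 108*z1^18*k^4*e^5 + 540*z1^18*k^5*e^3 - 36*z1^18*k^5*e^5 + 444*z1^18*k^6*e^3 - 164*z1^18*k^6*e^5 - 300*z1^18*k^7*e^3 - 24*z1^18*k^7*e^5 - 108*z1^18*k^8*e^3 + 68*z1^18*k^8*e^5 + 84*z1^18*k^9*e^3 + 4*z1^18*k^9*e^5 - 12*z1^18*k^10*e^3 - 12*z1^18*k^10*e^5 + 2*z1^18*k^11*e^5)).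
{ unfold A1, S23, P23, Tm4, h, qq. rewrite Es, Ep. unfold D, Q. field. exact HD. }
rewrite He in Key. replace (4*k-4*k) with (RtoC 0) in Key by ring.
rewrite Cmult_0_l in Key.
set (E := 2*e^2 * (S23 - A1) * (A1^2 - S23^2 + 4*P23) - Tm4*A1*P23) in *.
replace E with ((Q^3 * D^6 * E)/(Q^3*D^6)) by (field; split; assumption).
rewrite Key. field. split; assumption.
Qed.

Lemma pair_C (C1 S1 C2 S2 k mu : R) :
  (C1^2+S1^2 = 1)%R -> (C2^2+S2^2 = 1)%R ->
  ((1-k)*C1*C2 + (1+k)*S1*S2 = mu)%R ->
  (C1,S1)^2 + (C2,S2)^2 - RtoC k*((C1,S1)^2*(C2,S2)^2+1) = 2*RtoC mu*(C1,S1)*(C2,S2).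
Proof.
intros H1 H2 H. apply Ceq; cunf; nsatz.
Qed.

Lemma sq_diff (C1 S1 C2 S2 : R) :
  (C1^2+S1^2 = 1)%R -> (C2^2+S2^2 = 1)%R ->
  ((C1,S1) - (C2,S2))^2 = -2*(C1,S1)*(C2,S2)*RtoC (1 - C1*C2 - S1*S2).
Proof. intros H1 H2. apply Ceq; cunf; nsatz. Qed.

Lemma qq_lem (e C1 S1 : R) : (C1^2+S1^2 = 1)%R ->
  qq (RtoC e) (C1,S1) = 2*(C1,S1)*RtoC (1 + e*C1).
Proof. intros H1. unfold qq. apply Ceq; cunf; nsatz. Qed.

Lemma core3 (z1 z2 z3 k e : Complex.C) :
  1 - k*z1^2 <> 0 -> (3-k)*(1+k) <> 0 ->
  (z2+z3) * (1 - k*z1^2) = (k^2-1)*z1 -> z2*z3 * (1 - k*z1^2) = z1^2 - k ->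
  e^2*((3-k)*(1+k)) = 4*k ->
  let A1 := (z2-z3)^2*qq e z1 in
  let A2 := (z3-z1)^2*qq e z2 in
  let A3 := (z1-z2)^2*qq e z3 in
  let h := k*e^2+2-e^2 in
  let Tm4 := 2*h*(1+e^2) - h^2 - 4*e^2 in
  2*e^2*(A2+A3-A1)*(A1+A3-A2)*(A1+A2-A3) = Tm4*A1*A2*A3.
Proof.
intros HD HQ Hs Hp He A1 A2 A3 h Tm4.
pose proof (core_sp z1 (z2+z3) (z2*z3) k e HD HQ Hs Hp He) as K.
cbv zeta in K.
assert (ES : A2 + A3 = (- 2*(z2*z3)*e + 2*(z2*z3)^2*e + 2*(z2+z3)*(z2*z3) + (z2+z3)^2*e - 8*z1*(z2*z3) - 2*z1*(z2+z3)*e - 2*z1*(z2+z3)*(z2*z3)*e + 2*z1^2*e - 2*z1^2*(z2*z3)*e + 2*z1^2*(z2+z3) + z1^2*(z2+z3)^2*e)) by (unfold A2, A3, qq; ring).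
assert (EP : A2 * A3 = ((z2*z3)^2*e^2 + 4*(z2*z3)^3 - 2*(z2*z3)^3*e^2 + (z2*z3)^4*e^2 + 2*(z2+z3)*(z2*z3)^2*e + 2*(z2+z3)*(z2*z3)^3*e + (z2+z3)^2*(z2*z3)^2*e^2 - 2*z1*(z2+z3)*(z2*z3)*e^2 - 8*z1*(z2+z3)*(z2*z3)^2 + 4*z1*(z2+z3)*(z2*z3)^2*e^2 - 2*z1*(z2+z3)*(z2*z3)^3*e^2 - 4*z1*(z2+z3)^2*(z2*z3)*e - 4*z1*(z2+z3)^2*(z2*z3)^2*e - 2*z1*(z2+z3)^3*(z2*z3)*e^2 + 2*z1^2*(z2*z3)*e^2 + 8*z1^2*(z2*z3)^2 - 4*z1^2*(z2*z3)^2*e^2 + 2*z1^2*(z2*z3)^3*e^2 + 4*z1^2*(z2+z3)*(z2*z3)*e + 4*z1^2*(z2+z3)*(z2*z3)^2*e + z1^2*(z2+z3)^2*e^2 + 4*z1^2*(z2+z3)^2*(z2*z3) + z1^2*(z2+z3)^2*(z2*z3)^2*e^2 + 2*z1^2*(z2+z3)^3*e + 2*z1^2*(z2+z3)^3*(z2*z3)*e + z1^2*(z2+z3)^4*e^2 - 2*z1^3*(z2+z3)*e^2 - 8*z1^3*(z2+z3)*(z2*z3) + 4*z1^3*(z2+z3)*(z2*z3)*e^2 - 2*z1^3*(z2+z3)*(z2*z3)^2*e^2 - 4*z1^3*(z2+z3)^2*e - 4*z1^3*(z2+z3)^2*(z2*z3)*e - 2*z1^3*(z2+z3)^3*e^2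 + z1^4*e^2 + 4*z1^4*(z2*z3) - 2*z1^4*(z2*z3)*e^2 + z1^4*(z2*z3)^2*e^2 + 2*z1^4*(z2+z3)*e + 2*z1^4*(z2+z3)*(z2*z3)*e + z1^4*(z2+z3)^2*e^2)) by (unfold A2, A3, qq; ring).
assert (EA : A1 = ((z2+z3)^2 - 4*(z2*z3)) * qq e z1) by (unfold A1; ring).
rewrite <- ES, <- EP, <- EA in K.
assert (Z : 2*e^2*(A2+A3-A1)*(A1+A3-A2)*(A1+A2-A3) - Tm4*A1*A2*A3 = 0).
{ unfold Tm4, h. rewrite <- K. ring. }
replace (2*e^2*(A2+A3-A1)*(A1+A3-A2)*(A1+A2-A3)) with ((2*e^2*(A2+A3-A1)*(A1+A3-A2)*(A1+A2-A3) - Tm4*A1*A2*A3) + Tm4*A1*A2*A3) by ring.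
rewrite Z. ring.
Qed.

Lemma Cneq_pair (a b c d : R) : (a,b) <> (c,d) -> ((a,b) : Complex.C) <> (c,d).
Proof. auto. Qed.

Lemma alg_closure (C1 S1 C2 S2 C3 S3 k mu : R) :
  (C1^2+S1^2 = 1)%R -> (C2^2+S2^2 = 1)%R -> (C3^2+S3^2 = 1)%R ->
  (C1,S1) <> (C2,S2) -> (C1,S1) <> (C3,S3) -> (C2,S2) <> (C3,S3) ->
  ((1-k)*C1*C2 + (1+k)*S1*S2 = mu)%R ->
  ((1-k)*C1*C3 + (1+k)*S1*S3 = mu)%R ->
  ((1-k)*C2*C3 + (1+k)*S2*S3 = mu)%R ->
  k <> 0%R ->
  (k^2 = 1 + 2*mu)%R.
Proof.
intros U1 U2 U3 D12 D13 D23 P12 P13 P23 Hk.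
pose proof (pair_C C1 S1 C2 S2 k mu U1 U2 P12) as H12.
pose proof (pair_C C1 S1 C3 S3 k mu U1 U3 P13) as H13.
pose proof (pair_C C2 S2 C3 S3 k mu U2 U3 P23) as H23.
pose proof (pair_C C2 S2 C1 S1 k mu U2 U1 ltac:(rewrite <- P12; ring)) as H21.
pose proof (pair_C C3 S3 C1 S1 k mu U3 U1 ltac:(rewrite <- P13; ring)) as H31.
pose proof (pair_C C3 S3 C2 S2 k mu U3 U2 ltac:(rewrite <- P23; ring)) as H32.
pose proof (CE1 _ _ _ _ _ H12 H13 D23) as E1.
pose proof (CE1 _ _ _ _ _ H21 H23 D13) as E2.
pose proof (CE1 _ _ _ _ _ H31 H32 D12) as E3.
exact (closure C1 S1 C2 S2 C3 S3 k mu U1 U2 U3 D12 D13 D23 Hk E1 E2 E3).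
Qed.

Lemma alg_final (C1 S1 C2 S2 C3 S3 k mu e : R) :
  (C1^2+S1^2 = 1)%R -> (C2^2+S2^2 = 1)%R -> (C3^2+S3^2 = 1)%R ->
  (C1,S1) <> (C2,S2) -> (C1,S1) <> (C3,S3) -> (C2,S2) <> (C3,S3) ->
  ((1-k)*C1*C2 + (1+k)*S1*S2 = mu)%R ->
  ((1-k)*C1*C3 + (1+k)*S1*S3 = mu)%R ->
  ((1-k)*C2*C3 + (1+k)*S2*S3 = mu)%R ->
  (0 < k < 1)%R -> (e^2*((3-k)*(1+k)) = 4*k)%R ->
  let L1 := ((1 - C2*C3 - S2*S3)*(1+e*C1))%R in
  let L2 := ((1 - C1*C3 - S1*S3)*(1+e*C2))%R in
  let L3 := ((1 - C1*C2 - S1*S2)*(1+e*C3))%R in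
  let h := (k*e^2+2-e^2)%R in
  let Tm4 := (2*h*(1+e^2) - h^2 - 4*e^2)%R in
  (2*e^2*(L2+L3-L1)*(L1+L3-L2)*(L1+L2-L3) = Tm4*L1*L2*L3)%R.
Proof.
intros U1 U2 U3 D12 D13 D23 P12 P13 P23 Hk He L1 L2 L3 h Tm4.
assert (Hk0 : k <> 0%R) by lra.
pose proof (alg_closure C1 S1 C2 S2 C3 S3 k mu U1 U2 U3 D12 D13 D23 P12 P13 P23 Hk0) as Cl.
pose proof (pair_C C1 S1 C2 S2 k mu U1 U2 P12) as H12.
pose proof (pair_C C1 S1 C3 S3 k mu U1 U3 P13) as H13.
pose proof (CE1 _ _ _ _ _ H12 H13 D23) as E1.
pose proof (CVieta _ _ _ _ _ H12 E1) as V.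
set (z1 := (C1,S1) : Complex.C) in *. set (z2 := (C2,S2) : Complex.C) in *. set (z3 := (C3,S3) : Complex.C) in *.
assert (Mu : 2 * RtoC mu = RtoC k ^ 2 - 1) by (apply Ceq; cunf; nra).
rewrite Mu in E1.
assert (HD : 1 - RtoC k * z1^2 <> 0).
{ intro E. assert (F1 : fst (1 - RtoC k * z1^2) = 0%R) by (rewrite E; reflexivity).
  assert (F2 : snd (1 - RtoC k * z1^2) = 0%R) by (rewrite E; reflexivity).
  unfold z1 in F1, F2. cunf. nra. }
assert (HQ : (3 - RtoC k)*(1 + RtoC k) <> 0).
{ intro E. assert (F1 : fst ((3 - RtoC k)*(1 + RtoC k)) = 0%R) by (rewrite E; reflexivity).
  cunf. nra. }
assert (HeC : RtoC e ^ 2 * ((3 - RtoC k)*(1 + RtoC k)) = 4 * RtoC k).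
{ apply Ceq; cunf; [rewrite <- He; ring | ring]. }
pose proof (core3 z1 z2 z3 (RtoC k) (RtoC e) HD HQ E1 V HeC) as K.
cbv zeta in K.
set (m := -4*(z1*z2*z3)).
assert (A1 : (z2-z3)^2*qq (RtoC e) z1 = m * RtoC L1).
{ unfold z2, z3, z1. rewrite sq_diff, qq_lem by assumption. unfold m, L1. apply Ceq; cunf; ring. }
assert (A2 : (z3-z1)^2*qq (RtoC e) z2 = m * RtoC L2).
{ unfold z2, z3, z1. rewrite sq_diff, qq_lem by assumption. unfold m, L2. apply Ceq; cunf; ring. }
assert (A3 : (z1-z2)^2*qq (RtoC e) z3 = m * RtoC L3).
{ unfold z2, z3, z1. rewrite sq_diff, qq_lem by assumption. unfold m, L3. apply Ceq; cunf; ring. }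
rewrite A1, A2, A3 in K.
assert (NZ : forall a b : R, (a^2+b^2 = 1)%R -> ((a,b) : Complex.C) <> 0).
{ intros a b U E. assert (F1 : fst ((a,b) : Complex.C) = fst (RtoC 0)) by (rewrite E; reflexivity).
  assert (F2 : snd ((a,b) : Complex.C) = snd (RtoC 0)) by (rewrite E; reflexivity). cunf. subst. lra. }
assert (MN : forall x y : Complex.C, x <> 0 -> y <> 0 -> x * y <> 0).
{ intros x y Hx Hy E. apply Hy. apply (Cmul_eq0 x); assumption. }
assert (Hm : m <> 0).
{ unfold m. apply MN. intro E. assert (F : fst (-4 : Complex.C) = fst (RtoC 0)) by (rewrite E; reflexivity). cunf. lra.
  apply MN. apply MN. apply NZ; exact U1. apply NZ; exact U2. apply NZ; exact U3. }
apply RtoC_inj.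
assert (Z : RtoC (2*e^2*(L2+L3-L1)*(L1+L3-L2)*(L1+L2-L3) - Tm4*L1*L2*L3) = 0).
{ apply (Cmul_eq0 (m^3)). replace (m^3) with (m*(m*m)) by ring. apply MN. exact Hm. apply MN; exact Hm.
  set (l1 := RtoC L1) in *. set (l2 := RtoC L2) in *. set (l3 := RtoC L3) in *.
  unfold Tm4, h.
  repeat (first [rewrite RtoC_minus | rewrite RtoC_mult | rewrite RtoC_plus | rewrite RtoC_pow]).
  fold l1 l2 l3.
  match type of K with ?l = ?r => transitivity (l - r); [ring | rewrite K; ring] end. }
rewrite RtoC_minus in Z.
replace (RtoC (2*e^2*(L2+L3-L1)*(L1+L3-L2)*(L1+L2-L3))) with ((RtoC (2*e^2*(L2+L3-L1)*(L1+L3-L2)*(L1+L2-L3)) - RtoC (Tm4*L1*L2*L3)) + RtoC (Tm4*L1*L2*L3)) by ring.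
rewrite Z. ring.
Qed.

End Cx.

Open Scope R_scope.


Lemma dot_sym u v : dot u v = dot v u.
Proof. unfold dot; ring. Qed.

Lemma dot_nonneg u : 0 <= dot u u.
Proof. unfold dot. nra. Qed.

Lemma norm_sq u : norm u * norm u = dot u u.
Proof. unfold norm. apply sqrt_sqrt, dot_nonneg. Qed.

Lemma norm_nonneg u : 0 <= norm u.
Proof. unfold norm. apply sqrt_pos. Qed.

Lemma CS u v : -(norm u * norm v) <= dot u v <= norm u * norm v.
Proof.
assert (H : (dot u v)^2 <= dot u u * dot v v) by (destruct u as [u1 u2], v as [v1 v2]; unfold dot; simpl;
  assert (E : (u1*u1+u2*u2)*(v1*v1+v2*v2) - (u1*v1+u2*v2)^2 = (u1*v2-u2*v1)^2) by ring;
  pose proof (pow2_ge_0 (u1*v2-u2*v1)); lra).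
pose proof (norm_sq u). pose proof (norm_sq v). pose proof (norm_nonneg u). pose proof (norm_nonneg v).
assert (N2 : (dot u v)^2 <= (norm u * norm v)^2) by nra.
assert (0 <= norm u * norm v) by nra.
split; nra.
Qed.

Lemma ratio_bound u v : 0 < norm u -> 0 < norm v -> -1 <= dot u v / (norm u * norm v) <= 1.
Proof.
intros Hu Hv. pose proof (CS u v). assert (0 < norm u * norm v) by nra.
split.
- apply (Rmult_le_reg_r (norm u * norm v)); auto. unfold Rdiv. rewrite Rmult_assoc, Rinv_l by lra. lra.
- apply (Rmult_le_reg_r (norm u * norm v)); auto. unfold Rdiv. rewrite Rmult_assoc, Rinv_l by lra. lra.
Qed.

Lemma cos_vangle u v : 0 < norm u -> 0 < norm v -> cos (vangle u v) = dot u v / (norm u * norm v).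
Proof. intros. unfold vangle. apply cos_acos, ratio_bound; auto. Qed.

Lemma norm_pos u : u <> (0,0) -> 0 < norm u.
Proof. intros H. unfold norm. apply sqrt_lt_R0. destruct u as [x y]. unfold dot; simpl.
destruct (Req_dec x 0); destruct (Req_dec y 0); subst; [exfalso; auto| nra|nra|nra]. Qed.

Lemma norm_of_sq u L : 0 <= L -> dot u u = L*L -> norm u = L.
Proof. intros HL H. unfold norm. rewrite H. apply sqrt_square. auto. Qed.


Lemma vsub_nz (P Q : pt) : P <> Q -> vsub P Q <> (0,0).
Proof. destruct P as [x y], Q as [x' y']. unfold vsub; simpl. intros H E. injection E; intros. apply H. f_equal; lra. Qed.

Lemma inv_sq f rho P P' : P <> f -> P' <> f ->
  dot (vsub (invert f rho P') (invert f rho P)) (vsub (invert f rho P') (invert f rho P)) =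
  rho^4 * dot (vsub P' P) (vsub P' P) / (dot (vsub P f) (vsub P f) * dot (vsub P' f) (vsub P' f)).
Proof.
intros H1 H2.
pose proof (norm_pos _ (vsub_nz _ _ H1)) as N1. pose proof (norm_pos _ (vsub_nz _ _ H2)) as N2.
pose proof (norm_sq (vsub P f)) as S1. pose proof (norm_sq (vsub P' f)) as S2.
unfold invert, dist. 
replace ((rho / norm (vsub P f))^2) with (rho^2 / dot (vsub P f) (vsub P f)) by (rewrite <- S1; field; lra).
replace ((rho / norm (vsub P' f))^2) with (rho^2 / dot (vsub P' f) (vsub P' f)) by (rewrite <- S2; field; lra).
assert (D1 : dot (vsub P f) (vsub P f) <> 0) by nra.
assert (D2 : dot (vsub P' f) (vsub P' f) <> 0) by nra.
revert D1 D2. destruct P as [x y], P' as [x' y'], f as [u v]. unfold vadd, vsub, vscale, dot; simpl.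
intros D1 D2. field. split; assumption.
Qed.

Lemma bisect_g a b x y x2 y2 x3 y3 : 0 < a -> 0 < b -> x^2/a^2 + y^2/b^2 = 1 ->
  (x2,y2) <> (x,y) -> (x3,y3) <> (x,y) ->
  normal_bisects a b (x,y) (x2,y2) (x3,y3) ->
  (1 - x*x2/a^2 - y*y2/b^2) * norm (vsub (x3,y3) (x,y)) = (1 - x*x3/a^2 - y*y3/b^2) * norm (vsub (x2,y2) (x,y)).
Proof.
intros Ha Hb E D2 D3 H. unfold normal_bisects in H.
assert (Nn : 0 < norm (ellipse_normal a b (x,y))).
{ apply norm_pos. unfold ellipse_normal; cbn [fst snd]. intro Z. pose proof (f_equal fst Z) as Z2. pose proof (f_equal snd Z) as Z1. cbn [fst snd] in Z1, Z2.
  assert (X0 : x = 0) by ((replace x with ((x/a^2)*a^2) by (field; lra)); first [rewrite Z1 | rewrite Z2]; ring).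
  assert (Y0 : y = 0) by ((replace y with ((y/b^2)*b^2) by (field; lra)); first [rewrite Z1 | rewrite Z2]; ring).
  subst. field_simplify in E; lra. }
pose proof (norm_pos _ (vsub_nz _ _ D2)) as N2. pose proof (norm_pos _ (vsub_nz _ _ D3)) as N3.
apply (f_equal cos) in H. rewrite !cos_vangle in H by assumption.
assert (G2 : dot (ellipse_normal a b (x,y)) (vsub (x2,y2) (x,y)) = -(1 - x*x2/a^2 - y*y2/b^2)).
{ unfold ellipse_normal, dot, vsub; cbn [fst snd].
  replace (-(1 - x*x2/a^2 - y*y2/b^2)) with (-((x^2/a^2 + y^2/b^2) - x*x2/a^2 - y*y2/b^2)) by (rewrite E; ring).
  field. lra. }
assert (G3 : dot (ellipse_normal a b (x,y)) (vsub (x3,y3) (x,y)) = -(1 - x*x3/a^2 - y*y3/b^2)).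
{ unfold ellipse_normal, dot, vsub; cbn [fst snd].
  replace (-(1 - x*x3/a^2 - y*y3/b^2)) with (-((x^2/a^2 + y^2/b^2) - x*x3/a^2 - y*y3/b^2)) by (rewrite E; ring).
  field. lra. }
rewrite G2, G3 in H.
set (n := norm (ellipse_normal a b (x, y))) in *.
set (p2 := norm (vsub (x2, y2) (x, y))) in *. set (p3 := norm (vsub (x3, y3) (x, y))) in *.
set (g2 := 1 - x*x2/a^2 - y*y2/b^2) in *. set (g3 := 1 - x*x3/a^2 - y*y3/b^2) in *.
replace (g2*p3) with (-(-g2/(n*p2)) * (n*p2*p3)) by (field; lra).
rewrite H. field; lra.
Qed.




Lemma norm_sym P Q : norm (vsub P Q) = norm (vsub Q P).
Proof. destruct P, Q. unfold norm, vsub, dot; simpl. f_equal. ring. Qed.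

Lemma pow2_norm_sq u : norm u ^ 2 = dot u u.
Proof. rewrite <- norm_sq. ring. Qed.

Lemma polar A B C : dot (vsub B A) (vsub C A) =
  (dot (vsub B A) (vsub B A) + dot (vsub C A) (vsub C A) - dot (vsub C B) (vsub C B))/2.
Proof. destruct A, B, C. unfold vsub, dot; simpl. field. Qed.

Theorem mainTheorem7 (a b rho : R) (P1 P2 P3 : pt) :
  0 < b -> b < a -> 0 < rho ->
  three_periodic a b P1 P2 P3 ->
  let c := sqrt (a^2 - b^2) in
  let delta := sqrt (a^4 - a^2 * b^2 + b^4) in
  let f1 := focus1 a b in
  let Q1 := invert f1 rho P1 in
  let Q2 := invert f1 rho P2 in
  let Q3 := invert f1 rho P3 in
  cos (angle_at Q1 Q2 Q3) + cos (angle_at Q2 Q3 Q1) + cos (angle_at Q3 Q1 Q2)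
  = delta * (a^2 + c^2 - delta) / (a^2 * c^2).
Proof.
intros Hb Hba Hr [E1 [E2 [E3 [D12 [D23 [D31 [B1 [B2 B3]]]]]]]] c delta f1 Q1 Q2 Q3.
assert (Ha : 0 < a) by lra.
assert (Hc2 : c^2 = a^2 - b^2).
{ unfold c. apply pow2_sqrt. clear -Hb Hba. nra. }
assert (Hc : 0 < c) by (unfold c; apply sqrt_lt_R0; nra).
assert (Hca : c < a) by nra.
assert (Hd2 : delta^2 = a^4 - a^2*b^2 + b^4) by (unfold delta; apply pow2_sqrt; nra).
assert (Hd : 0 < delta) by (unfold delta; apply sqrt_lt_R0; assert (0 < a^2*b^2) by (apply Rmult_lt_0_compat; nra); nra).
destruct P1 as [x1 y1], P2 as [x2 y2], P3 as [x3 y3].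
unfold on_ellipse in E1, E2, E3. cbn [fst snd] in E1, E2, E3.
set (C1 := x1/a) in *. set (S1 := y1/b) in *.
set (C2 := x2/a) in *. set (S2 := y2/b) in *.
set (C3 := x3/a) in *. set (S3 := y3/b) in *.
assert (X1 : x1 = a*C1) by (unfold C1; field; lra).
assert (X2 : x2 = a*C2) by (unfold C2; field; lra).
assert (X3 : x3 = a*C3) by (unfold C3; field; lra).
assert (Y1 : y1 = b*S1) by (unfold S1; field; lra).
assert (Y2 : y2 = b*S2) by (unfold S2; field; lra).
assert (Y3 : y3 = b*S3) by (unfold S3; field; lra).
assert (U1 : C1^2 + S1^2 = 1) by (rewrite <- E1; unfold C1, S1; field; lra).
assert (U2 : C2^2 + S2^2 = 1) by (rewrite <- E2; unfold C2, S2; field; lra).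
assert (U3 : C3^2 + S3^2 = 1) by (rewrite <- E3; unfold C3, S3; field; lra).
clearbody C1 S1 C2 S2 C3 S3. subst x1 x2 x3 y1 y2 y3.
assert (Dp : forall u v w z : R, (u,v) <> (w,z) -> 0 < (u-w)^2 + (v-z)^2).
{ intros u v w z H. destruct (Req_dec u w); destruct (Req_dec v z); subst.
  - exfalso; auto.
  - assert (0 < Rsqr (v-z)) by (apply Rsqr_pos_lt; lra); unfold Rsqr in *. nra.
  - assert (0 < Rsqr (u-w)) by (apply Rsqr_pos_lt; lra); unfold Rsqr in *. nra.
  - assert (0 < Rsqr (u-w)) by (apply Rsqr_pos_lt; lra); unfold Rsqr in *. nra. }
assert (DC : forall u v w z : R, (a*u,b*v) <> (a*w,b*z) -> (u,v) <> (w,z)).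
{ intros u v w z H E. apply H. injection E. intros; subst; reflexivity. }
assert (DC12 := DC _ _ _ _ D12). assert (DC23 := DC _ _ _ _ D23). assert (DC31 := DC _ _ _ _ D31).
assert (DC13 : (C1,S1) <> (C3,S3)) by (intro E; apply DC31; symmetry; exact E).
set (g12 := 1 - C1*C2 - S1*S2). set (g13 := 1 - C1*C3 - S1*S3). set (g23 := 1 - C2*C3 - S2*S3).
assert (Gp12 : 0 < g12) by (pose proof (Dp _ _ _ _ DC12); unfold g12; nra).
assert (Gp13 : 0 < g13) by (pose proof (Dp _ _ _ _ DC13); unfold g13; nra).
assert (Gp23 : 0 < g23) by (pose proof (Dp _ _ _ _ DC23); unfold g23; nra).
set (p12 := norm (vsub (a*C2,b*S2) (a*C1,b*S1))).
set (p13 := norm (vsub (a*C3,b*S3) (a*C1,b*S1))).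
set (p23 := norm (vsub (a*C3,b*S3) (a*C2,b*S2))).
assert (Pp12 : 0 < p12) by (apply norm_pos, vsub_nz; intro E; apply D12; symmetry; exact E).
assert (Pp13 : 0 < p13) by (apply norm_pos, vsub_nz; exact D31).
assert (Pp23 : 0 < p23) by (apply norm_pos, vsub_nz; intro E; apply D23; symmetry; exact E).
assert (PP12 : p12^2 = a^2*(C2-C1)^2 + b^2*(S2-S1)^2) by (unfold p12; rewrite pow2_norm_sq; unfold vsub, dot; simpl; ring).
assert (PP13 : p13^2 = a^2*(C3-C1)^2 + b^2*(S3-S1)^2) by (unfold p13; rewrite pow2_norm_sq; unfold vsub, dot; simpl; ring).
assert (PP23 : p23^2 = a^2*(C3-C2)^2 + b^2*(S3-S2)^2) by (unfold p23; rewrite pow2_norm_sq; unfold vsub, dot; simpl; ring).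
assert (EE : forall C S, C^2+S^2 = 1 -> (a*C)^2/a^2 + (b*S)^2/b^2 = 1).
{ intros C S H. rewrite <- H. field. lra. }
pose proof (bisect_g a b _ _ _ _ _ _ Ha Hb (EE _ _ U1) (fun E => D12 (eq_sym E)) D31 B1) as BB1.
pose proof (bisect_g a b _ _ _ _ _ _ Ha Hb (EE _ _ U2) (fun E => D23 (eq_sym E)) D12 B2) as BB2.
fold p13 p12 in BB1. rewrite (norm_sym (a*C1,b*S1) (a*C2,b*S2)) in BB2. fold p12 p23 in BB2.
replace (1 - a*C1*(a*C2)/a^2 - b*S1*(b*S2)/b^2) with g12 in BB1 by (unfold g12; field; lra).
replace (1 - a*C1*(a*C3)/a^2 - b*S1*(b*S3)/b^2) with g13 in BB1 by (unfold g13; field; lra).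
replace (1 - a*C2*(a*C3)/a^2 - b*S2*(b*S3)/b^2) with g23 in BB2 by (unfold g23; field; lra).
replace (1 - a*C2*(a*C1)/a^2 - b*S2*(b*S1)/b^2) with g12 in BB2 by (unfold g12; field; lra).
set (K := (g12/p12)^2).
assert (KP : 0 < K) by (unfold K; apply pow_lt; apply Rdiv_lt_0_compat; lra).
assert (K12 : g12^2 = K * p12^2) by (unfold K; field; lra).
assert (K13 : g13^2 = K * p13^2).
{ unfold K. replace g13 with (g12*p13/p12) by (field_simplify; [|lra]; apply (Rmult_eq_reg_r p12); [|lra]; field_simplify; lra). field; lra. }
assert (K23 : g23^2 = K * p23^2).
{ unfold K. replace g23 with (g12*p23/p12) by (field_simplify; [|lra]; apply (Rmult_eq_reg_r p12); [|lra]; field_simplify; lra). field; lra. }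
assert (Mid : forall Ci Si Cj Sj, Ci^2+Si^2=1 -> Cj^2+Sj^2=1 ->
   a^2*(Cj-Ci)^2 + b^2*(Sj-Si)^2 = (1 - Ci*Cj - Si*Sj)*(a^2+b^2 - c^2*(Ci*Cj - Si*Sj))).
{ intros Ci Si Cj Sj Hi Hj. rewrite Hc2.
  assert (Z : (b^2 - Sj^2*b^2 + Sj^2*a^2)*(Ci^2+Si^2-1) + (a^2 + Ci^2*b^2 - Ci^2*a^2)*(Cj^2+Sj^2-1) = 0) by (rewrite Hi, Hj; ring).
  apply Rminus_diag_uniq. rewrite <- Z. ring. }
assert (Lin : forall g M pp, 0 < g -> g^2 = K*pp -> pp = g*M -> g = K*M).
{ intros g M pp Hg H1 H2. rewrite H2 in H1. apply (Rmult_eq_reg_l g); [|lra]. replace (g*g) with (g^2) by ring. rewrite H1. ring. }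
set (kap := K*c^2). set (mu := 1 - K*(a^2+b^2)).
assert (R12 : (1-kap)*C1*C2 + (1+kap)*S1*S2 = mu).
{ pose proof (Lin g12 _ _ Gp12 K12 (eq_trans PP12 (Mid _ _ _ _ U1 U2))) as L. unfold g12 in L. unfold kap, mu. lra. }
assert (R13 : (1-kap)*C1*C3 + (1+kap)*S1*S3 = mu).
{ pose proof (Lin g13 _ _ Gp13 K13 (eq_trans PP13 (Mid _ _ _ _ U1 U3))) as L. unfold g13 in L. unfold kap, mu. lra. }
assert (R23 : (1-kap)*C2*C3 + (1+kap)*S2*S3 = mu).
{ pose proof (Lin g23 _ _ Gp23 K23 (eq_trans PP23 (Mid _ _ _ _ U2 U3))) as L. unfold g23 in L. unfold kap, mu. lra. }
assert (kapP : 0 < kap) by (unfold kap; apply Rmult_lt_0_compat; [lra | apply pow_lt; lra]).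
pose proof (Cx.alg_closure C1 S1 C2 S2 C3 S3 kap mu U1 U2 U3 DC12 DC13 DC23 R12 R13 R23 ltac:(lra)) as Cl.
assert (KV : c^4*K + a^2 + b^2 = 2*delta).
{ assert (Q : (c^4*K + a^2 + b^2)^2 = (2*delta)^2).
  { unfold kap, mu in Cl. replace ((2*delta)^2) with (4*delta^2) by ring. rewrite Hd2. replace (c^4) with ((c^2)^2) by ring. rewrite Hc2 in Cl |- *. 
    replace (((a^2-b^2)^2*K + a^2 + b^2)^2) with ((a^2-b^2)^2*((K*(a^2-b^2))^2 - (1 + 2*(1 - K*(a^2+b^2)))) + (a^2+b^2)^2 + 3*(a^2-b^2)^2) by ring.
    rewrite Cl. ring. }
  assert (0 < c^4*K + a^2 + b^2) by (assert (0 < c^4*K) by (apply Rmult_lt_0_compat; [apply pow_lt|]; lra); nra).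
  nra. }
assert (kc2 : kap*c^2 = 2*delta - a^2 - b^2).
{ unfold kap. rewrite <- KV. ring. }
assert (kap1 : kap < 1).
{ assert (delta < a^2).
  { assert (delta^2 < (a^2)^2) by (rewrite Hd2; assert (0 < b^2*(a^2-b^2)) by (apply Rmult_lt_0_compat; nra); nra). nra. }
  assert (kap*c^2 < 1*c^2) by (rewrite kc2, Hc2; lra).
  apply (Rmult_lt_reg_r (c^2)); [apply pow_lt; lra|]. exact H0. }
set (e := c/a).
assert (He : e^2*((3-kap)*(1+kap)) = 4*kap).
{ unfold e.
  replace ((c/a)^2*((3-kap)*(1+kap))) with ((3*c^2 - kap*c^2)*(c^2 + kap*c^2)/(a^2*c^2)) by (field; lra).
  replace (4*kap) with (4*a^2*(kap*c^2)/(a^2*c^2)) by (field; lra).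
  rewrite kc2, Hc2. f_equal.
  apply Rminus_diag_uniq.
  replace ((3 * (a ^ 2 - b ^ 2) - (2 * delta - a ^ 2 - b ^ 2)) * (a ^ 2 - b ^ 2 + (2 * delta - a ^ 2 - b ^ 2)) - 4 * a ^ 2 * (2 * delta - a ^ 2 - b ^ 2)) with (-4*(delta^2 - (a^4 - a^2*b^2 + b^4))) by ring.
  rewrite Hd2. ring. }
pose proof (Cx.alg_final C1 S1 C2 S2 C3 S3 kap mu e U1 U2 U3 DC12 DC13 DC23 R12 R13 R23 (conj kapP kap1) He) as AF.
cbv zeta in AF.
fold g12 g13 g23 in AF.
assert (e0 : 0 < e) by (unfold e; apply Rdiv_lt_0_compat; lra).
assert (e1 : e < 1) by (unfold e; apply (Rmult_lt_reg_r a); [lra|]; field_simplify; lra).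
assert (Dpos : forall C S, C^2+S^2=1 -> 0 < 1 + e*C).
{ intros C S H. assert (C <= 1) by nra. assert (-1 <= C) by nra. nra. }
pose proof (Dpos _ _ U1) as D1p. pose proof (Dpos _ _ U2) as D2p. pose proof (Dpos _ _ U3) as D3p.
assert (F1 : f1 = (-c,0)) by reflexivity.
assert (bc : b^2 = a^2 - c^2) by lra.
assert (dsq : forall C S, C^2+S^2=1 -> dot (vsub (a*C,b*S) f1) (vsub (a*C,b*S) f1) = a^2*(1+e*C)^2).
{ intros C S H. rewrite F1. unfold vsub, dot; cbn [fst snd].
  transitivity ((a+c*C)^2); [|unfold e; field; lra].
  apply Rminus_diag_uniq.
  replace ((a * C - - c) * (a * C - - c) + (b * S - 0) * (b * S - 0) - (a + c * C) ^ 2) with ((b^2 - (a^2-c^2))*S^2 + (a^2-c^2)*(C^2+S^2-1)) by ring.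
  rewrite bc, H. ring. }
assert (nf : forall C S, C^2+S^2=1 -> (a*C,b*S) <> f1).
{ intros C S H E. pose proof (dsq C S H) as Z. rewrite E in Z. unfold vsub, dot in Z. cbn [fst snd] in Z.
  pose proof (Dpos C S H). assert (0 < a^2*(1+e*C)^2) by (apply Rmult_lt_0_compat; [nra| apply pow_lt; lra]). nra. }
assert (QQ : forall Ci Si Cj Sj gij, Ci^2+Si^2=1 -> Cj^2+Sj^2=1 ->
   gij^2 = K*(a^2*(Cj-Ci)^2+b^2*(Sj-Si)^2) ->
   dot (vsub (invert f1 rho (a*Cj,b*Sj)) (invert f1 rho (a*Ci,b*Si))) (vsub (invert f1 rho (a*Cj,b*Sj)) (invert f1 rho (a*Ci,b*Si)))
   = rho^4*gij^2/(K*a^4*(1+e*Ci)^2*(1+e*Cj)^2)).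
{ intros Ci Si Cj Sj gij Hi Hj Hg. rewrite inv_sq by (apply nf; assumption).
  rewrite (dsq _ _ Hi), (dsq _ _ Hj).
  replace (dot (vsub (a*Cj,b*Sj) (a*Ci,b*Si)) (vsub (a*Cj,b*Sj) (a*Ci,b*Si))) with (gij^2/K) by (rewrite Hg; unfold vsub, dot; cbn [fst snd]; field; lra).
  pose proof (Dpos _ _ Hi). pose proof (Dpos _ _ Hj).
  field. repeat split; lra. }
pose proof (QQ C1 S1 C2 S2 g12 U1 U2 ltac:(rewrite K12, PP12; ring)) as Q12.
fold Q1 Q2 in Q12.
pose proof (QQ C2 S2 C1 S1 g12 U2 U1 ltac:(rewrite K12, PP12; ring)) as Q21.
fold Q2 Q1 in Q21.
pose proof (QQ C1 S1 C3 S3 g13 U1 U3 ltac:(rewrite K13, PP13; ring)) as Q13.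
fold Q1 Q3 in Q13.
pose proof (QQ C3 S3 C1 S1 g13 U3 U1 ltac:(rewrite K13, PP13; ring)) as Q31.
fold Q3 Q1 in Q31.
pose proof (QQ C2 S2 C3 S3 g23 U2 U3 ltac:(rewrite K23, PP23; ring)) as Q23.
fold Q2 Q3 in Q23.
pose proof (QQ C3 S3 C2 S2 g23 U3 U2 ltac:(rewrite K23, PP23; ring)) as Q32.
fold Q3 Q2 in Q32.
set (D1 := 1+e*C1) in *. set (D2 := 1+e*C2) in *. set (D3 := 1+e*C3) in *.
set (sk := sqrt K).
assert (skp : 0 < sk) by (unfold sk; apply sqrt_lt_R0; lra).
assert (KE : K = sk^2) by (unfold sk; rewrite pow2_sqrt; lra).
set (Lam := rho^2/(sk*a^2*(D1*D2*D3))).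
assert (Lp : 0 < Lam) by (unfold Lam; apply Rdiv_lt_0_compat; [nra| repeat apply Rmult_lt_0_compat; nra]).
set (L1 := g23*D1) in *. set (L2 := g13*D2) in *. set (L3 := g12*D3) in *.
assert (L1p : 0 < L1) by (unfold L1; nra). assert (L2p : 0 < L2) by (unfold L2; nra). assert (L3p : 0 < L3) by (unfold L3; nra).
assert (W12 : rho^4*g12^2/(K*a^4*D1^2*D2^2) = (Lam*L3)^2) by (unfold Lam, L3; rewrite KE; field; repeat split; lra).
assert (W13 : rho^4*g13^2/(K*a^4*D1^2*D3^2) = (Lam*L2)^2) by (unfold Lam, L2; rewrite KE; field; repeat split; lra).
assert (W23 : rho^4*g23^2/(K*a^4*D2^2*D3^2) = (Lam*L1)^2) by (unfold Lam, L1; rewrite KE; field; repeat split; lra).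
assert (W21 : rho^4*g12^2/(K*a^4*D2^2*D1^2) = (Lam*L3)^2) by (unfold Lam, L3; rewrite KE; field; repeat split; lra).
assert (W31 : rho^4*g13^2/(K*a^4*D3^2*D1^2) = (Lam*L2)^2) by (unfold Lam, L2; rewrite KE; field; repeat split; lra).
assert (W32 : rho^4*g23^2/(K*a^4*D3^2*D2^2) = (Lam*L1)^2) by (unfold Lam, L1; rewrite KE; field; repeat split; lra).
rewrite W12 in Q12. rewrite W13 in Q13. rewrite W23 in Q23. rewrite W21 in Q21. rewrite W31 in Q31. rewrite W32 in Q32.
assert (N12 : norm (vsub Q2 Q1) = Lam*L3) by (apply norm_of_sq; [nra| rewrite Q12; ring]).
assert (N13 : norm (vsub Q3 Q1) = Lam*L2) by (apply norm_of_sq; [nra| rewrite Q13; ring]).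
assert (N23 : norm (vsub Q3 Q2) = Lam*L1) by (apply norm_of_sq; [nra| rewrite Q23; ring]).
assert (N21 : norm (vsub Q1 Q2) = Lam*L3) by (apply norm_of_sq; [nra| rewrite Q21; ring]).
assert (N31 : norm (vsub Q1 Q3) = Lam*L2) by (apply norm_of_sq; [nra| rewrite Q31; ring]).
assert (N32 : norm (vsub Q2 Q3) = Lam*L1) by (apply norm_of_sq; [nra| rewrite Q32; ring]).
unfold angle_at.
rewrite !cos_vangle by (rewrite ?N12, ?N13, ?N23, ?N21, ?N31, ?N32; nra).
rewrite (polar Q1 Q2 Q3), (polar Q2 Q3 Q1), (polar Q3 Q1 Q2).
rewrite Q12, Q13, Q23, Q21, Q31, Q32, N12, N13, N23, N21, N31, N32.
set (h := kap*e^2+2-e^2) in AF.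
set (Tm4 := 2*h*(1+e^2) - h^2 - 4*e^2) in AF.
assert (dh : delta = a^2*h/2).
{ unfold h, e. replace (kap*(c/a)^2) with (kap*c^2/a^2) by (field; lra). rewrite kc2. transitivity ((2*delta + a^2 - b^2 - c^2)/2); [rewrite Hc2; field | field; lra]. }
assert (ce : c = a*e) by (unfold e; field; lra).
rewrite dh, ce.
assert (TT : Tm4 = 2*e^2*(L2+L3-L1)*(L1+L3-L2)*(L1+L2-L3)/(L1*L2*L3)).
{ rewrite AF. field. repeat split; lra. }
transitivity (1 + Tm4/(4*e^2)).
- rewrite TT. field. repeat split; lra.
- unfold Tm4. field. split; lra.
Qed.
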